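(* Let $G$ be a distance-regular graph of diameter $d$ which is an antipodal double cover, and let $B$ be its tridiagonal intersection matrix. If $G$ admits a distance magic labeling, then $\ker B$ has a basis consisting of a single vector $\boldsymbol{u}=(u_0,\dots,u_d)^T$ with $u_0=1$ and $u_d=-1$. If $G$ admits a closed distance magic labeling, then $\ker(I+B)$ has a basis consisting of a single vector $\boldsymbol{u}=(u_0,\dots,u_d)^T$ with $u_0=1$ and $u_d=-1$.
   Context: A connected graph $G$ of diameter $d$ is distance-regular if there are non-negative integers $b_i,c_i$ ($0\le i\le d$) such that for any two vertices $x,y$ at distance $i$, $y$ has exactly $c_i$ neighbours at distance $i-1$ from $x$ and exactly $b_i$ neighbours at distance $i+1$ from $x$. $G$ is $r$-regular with $r=b_0$, $c_0=b_d=0$, $c_1=1$, $a_i=r-b_i-c_i$. $B$ is the $(d+1)\times(d+1)$ tridiagonal matrix indexed by $0,\dots,d$ with $B_{i,i}=a_i$, $B_{i,i+1}=c_{i+1}$, $B_{i+1,i}=b_i$, other entries $0$. $G$ is an antipodal double cover if every vertex has exactly one vertex at distance $d$ from it. A distance magic (resp. closed distance magic) labeling of $G$ of order $N$ is a bijection $l:V(G)\to\{1,\dots,N\}$ such that $\sum_{y\in N(x)}l(y)$ (resp. $\sum_{y\in N(x)\cup\{x\}}l(y)$) is the same for every vertex $x$. *)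

(* Defs.v *)
From mathcomp Require Import all_boot all_order all_algebra.
Set Implicit Arguments. Unset Strict Implicit. Unset Printing Implicit Defensive.
Import Order.TTheory GRing.Theory Num.Theory.

Definition simple_graph (T : finType) (e : rel T) : Prop :=
  symmetric e /\ irreflexive e.

Definition connected_graph (T : finType) (e : rel T) : Prop :=
  forall x y : T, connect e x y.

Definition ball (T : finType) (e : rel T) (x : T) (n : nat) : {set T} :=
  iter n (fun A : {set T} => A :|: [set y | [exists z in A, e z y]]) [set x].

(* graph distance: least n with y in ball e x n (equals #|T| if unreachable) *)
Definition gdist (T : finType) (e : rel T) (x y : T) : nat :=
  find (fun n => y \in ball e x n) (iota 0 #|T|).

Definition diameter (T : finType) (e : rel T) : nat :=
  \max_(x : T) \max_(y : T) gdist e x y.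

Definition distance_regular (T : finType) (e : rel T) (d : nat)
    (b c : nat -> nat) : Prop :=
  simple_graph e /\ connected_graph e /\ diameter e = d /\
  forall (i : nat) (x y : T), i <= d -> gdist e x y = i ->
    #|[set z | e y z & gdist e x z == i.-1]| = c i /\
    #|[set z | e y z & gdist e x z == i.+1]| = b i.

Definition antipodal_double_cover (T : finType) (e : rel T) (d : nat) : Prop :=
  forall x : T, #|[set y | gdist e x y == d]| = 1.

(* intersection matrix B, indexed by 0..d; a_i = r - b_i - c_i, r = b_0 *)
Definition inter_mx (R : nzRingType) (d : nat) (b c : nat -> nat) : 'M[R]_d.+1 :=
  (\matrix_(i < d.+1, j < d.+1)
    if (j : nat) == i then ((b 0)%:R - (b i)%:R - (c i)%:R : R)
    else if (j : nat) == i.+1 then (c j)%:R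
    else if (i : nat) == j.+1 then (b j)%:R
    else 0)%R.

Definition labeling (T : finType) (l : T -> nat) : Prop :=
  injective l /\ forall x, 1 <= l x <= #|T|.

Definition distance_magic (T : finType) (e : rel T) : Prop :=
  exists l : T -> nat, labeling l /\
    exists k : nat, forall x : T, \sum_(y | e x y) l y = k.

Definition closed_distance_magic (T : finType) (e : rel T) : Prop :=
  exists l : T -> nat, labeling l /\
    exists k : nat, forall x : T, \sum_(y | e x y || (y == x)) l y = k.

(* Main.v *)
Require Import Defs.
From mathcomp Require Import all_boot all_order all_algebra.
From mathcomp Require Import zify ring.
Import GRing.Theory Num.Theory.
Set Implicit Arguments. Unset Strict Implicit. Unset Printing Implicit Defensive.

Definition stp (T : finType) (e : rel T) (A : {set T}) : {set T} :=
  A :|: [set y | [exists z in A, e z y]].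

Lemma stp_mono (T : finType) (e : rel T) (A B : {set T}) :
  A \subset B -> stp e A \subset stp e B.
Proof.
move=> AB; apply/subsetP => y; rewrite !in_setU !in_set.
case/orP => [yA|/existsP[z /andP[zA ezy]]]; first by rewrite (subsetP AB).
by apply/orP; right; apply/existsP; exists z; rewrite (subsetP AB).
Qed.

Lemma iter_stp_mono (T : finType) (e : rel T) n (A B : {set T}) :
  A \subset B -> iter n (stp e) A \subset iter n (stp e) B.
Proof. by move=> AB; elim: n => //= n IH; apply: stp_mono. Qed.

Lemma ballE (T : finType) (e : rel T) x n : ball e x n = iter n (stp e) [set x].
Proof. by []. Qed.

Lemma sub_stp (T : finType) (e : rel T) (A : {set T}) : A \subset stp e A.
Proof. exact: subsetUl. Qed.

Lemma ball_mono (T : finType) (e : rel T) x m n : m <= n ->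
  ball e x m \subset ball e x n.
Proof.
move=> /subnK <-; elim: (n - m) => [|k IH]; first by rewrite add0n.
rewrite addSn ballE /= -ballE; apply: subset_trans IH (sub_stp _ _).
Qed.

Lemma in_ball0 (T : finType) (e : rel T) x y : (y \in ball e x 0) = (y == x).
Proof. by rewrite ballE /= in_set1. Qed.

Lemma in_ballS (T : finType) (e : rel T) x n y :
  (y \in ball e x n.+1) = (y \in ball e x n) || [exists z in ball e x n, e z y].
Proof. by rewrite ballE /= /stp in_setU in_set. Qed.

Lemma ball_shift (T : finType) (e : rel T) y w m : e y w ->
  ball e w m \subset ball e y m.+1.
Proof.
move=> eyw; rewrite !ballE iterSr; apply: iter_stp_mono.
apply/subsetP => z; rewrite in_set1 => /eqP ->.
by rewrite /stp in_setU in_set; apply/orP; right; apply/existsP; exists y; rewrite in_set1 eqxx.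
Qed.

Lemma path_ball (T : finType) (e : rel T) x p : path e x p ->
  last x p \in ball e x (size p).
Proof.
elim: p x => [|z p IH] x /=; first by rewrite in_ball0.
case/andP => exz pz; exact: (subsetP (ball_shift _ exz)) (IH _ pz).
Qed.

Lemma connect_ball (T : finType) (e : rel T) x y : connect e x y ->
  exists2 n, n < #|T| & y \in ball e x n.
Proof.
case/connectP => p pth ->.
case: (shortenP pth) => p' pth' un _.
exists (size p'); last exact: path_ball.
have H := card_uniqP un.
by have := max_card (mem (x :: p')); rewrite H.
Qed.


Lemma gdist_le0 (T : finType) (e : rel T) x y n : n < #|T| ->
  y \in ball e x n -> gdist e x y <= n.
Proof.
move=> nT yb; rewrite /gdist leqNgt; apply/negP => lt.
have := before_find 0 lt; by rewrite nth_iota // add0n yb.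
Qed.

Lemma gdist_ball (T : finType) (e : rel T) x y : connected_graph e ->
  gdist e x y < #|T| /\ y \in ball e x (gdist e x y).
Proof.
move=> conn; have [n nT yb] := connect_ball (conn x y).
have le := gdist_le0 nT yb.
have lt : gdist e x y < #|T| by apply: leq_ltn_trans le nT.
split=> //; move: lt; rewrite /gdist => lt.
have hs : has (fun n => y \in ball e x n) (iota 0 #|T|) by rewrite has_find size_iota.
by have := nth_find 0 hs; rewrite nth_iota // add0n.
Qed.

Lemma gdist_le (T : finType) (e : rel T) x y n : connected_graph e ->
  y \in ball e x n -> gdist e x y <= n.
Proof.
move=> conn yb; case: (ltnP n #|T|) => nT; first exact: gdist_le0.
by have [lt _] := gdist_ball x y conn; apply: leq_trans (ltnW lt) nT.
Qed.

Lemma gdist_xx (T : finType) (e : rel T) x : connected_graph e -> gdist e x x = 0.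
Proof. by move=> conn; apply/eqP; rewrite -leqn0; apply: gdist_le => //; rewrite in_ball0. Qed.

Lemma gdist_eq0 (T : finType) (e : rel T) x y : connected_graph e ->
  (gdist e x y == 0) = (y == x).
Proof.
move=> conn; apply/idP/idP => [/eqP H|/eqP ->]; last by rewrite gdist_xx.
by have [_] := gdist_ball x y conn; rewrite H in_ball0.
Qed.

Lemma gdist_tri (T : finType) (e : rel T) x y z : connected_graph e ->
  e y z -> gdist e x z <= (gdist e x y).+1.
Proof.
move=> conn eyz; apply: gdist_le => //; rewrite in_ballS; apply/orP; right.
by apply/existsP; exists y; rewrite eyz (gdist_ball x y conn).2.
Qed.

Lemma gdist_sym_le (T : finType) (e : rel T) x y : connected_graph e ->
  symmetric e -> gdist e y x <= gdist e x y.
Proof.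
move=> conn sym.
suff H : forall n y, y \in ball e x n -> gdist e y x <= n.
  by apply: H; exact: (gdist_ball x y conn).2.
elim=> [|n IH] {}y; first by rewrite in_ball0 => /eqP ->; rewrite gdist_xx.
rewrite in_ballS => /orP[/IH/leqW //|/existsP[z /andP[zb ezy]]].
apply: gdist_le => //.
have H1 : x \in ball e z n.
  by apply: (subsetP (ball_mono _ _ (IH _ zb))); exact: (gdist_ball z x conn).2.
by apply: (subsetP (ball_shift _ _)) H1; rewrite sym.
Qed.

Lemma gdist_sym (T : finType) (e : rel T) x y : connected_graph e ->
  symmetric e -> gdist e x y = gdist e y x.
Proof. by move=> c s; apply/eqP; rewrite eqn_leq !gdist_sym_le. Qed.

Lemma gdist_pred (T : finType) (e : rel T) x y i : connected_graph e ->
  symmetric e -> gdist e x y = i.+1 -> exists w, e y w /\ gdist e x w = i.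
Proof.
move=> conn sym H.
have [_ yb] := gdist_ball x y conn; rewrite H in_ballS in yb.
case/orP: yb => [/(gdist_le conn)|/existsP[z /andP[zb ezy]]]; first by rewrite H ltnn.
exists z; split; first by rewrite sym.
have h1 := gdist_le conn zb.
have h2 := gdist_tri x conn ezy.
lia.
Qed.

Lemma gdist_diam (T : finType) (e : rel T) x y : gdist e x y <= diameter e.
Proof.
rewrite /diameter; apply: leq_trans (leq_bigmax x).
exact: (leq_bigmax (F := fun y => gdist e x y) y).
Qed.


Lemma card_sumb (T : finType) (Q : pred T) : #|[set y | Q y]| = \sum_y (Q y : nat).
Proof.
rewrite -sum1_card big_mkcond /=; apply: eq_bigr => y _; rewrite in_set.
by case: (Q y).
Qed.

Lemma deg_b0 (T : finType) (e : rel T) d b c y : distance_regular e d b c ->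
  #|[set z | e y z]| = b 0.
Proof.
case=> [[sym irr] [conn [_ DR]]].
have [_ <-] := DR 0 y y (leq0n _) (gdist_xx y conn).
apply: eq_card => z; rewrite !in_set; case ez: (e y z) => //=.
have h := gdist_tri y conn ez; rewrite gdist_xx // in h.
have : gdist e y z != 0 by rewrite gdist_eq0 //; apply/eqP => zy; rewrite zy irr in ez.
by move: h; case: (gdist e y z) => [|[|n]].
Qed.

Lemma c0_eq0 (T : finType) (e : rel T) d b c (x : T) : distance_regular e d b c ->
  c 0 = 0.
Proof.
case=> [[sym irr] [conn [_ DR]]].
have [<- _] := DR 0 x x (leq0n _) (gdist_xx x conn).
apply: eq_card0 => z; rewrite !in_set gdist_eq0 //.
by apply/negP => /andP[ez /eqP zx]; rewrite zx irr in ez.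
Qed.

Lemma count_B (R : nzRingType) (T : finType) (e : rel T) d b c x z
    (i j : 'I_d.+1) : distance_regular e d b c -> gdist e x z = j ->
  ((#|[set y | e z y & gdist e x y == i]|)%:R = inter_mx R d b c i j)%R.
Proof.
move=> DRG; have := DRG; case=> [[sym irr] [conn [_ DR]]] hz.
have hj : j <= d by rewrite -ltnS.
have [Hc Hb] := DR j x z hj hz.
have tri : forall y, e z y -> (j <= (gdist e x y).+1) && (gdist e x y <= j.+1).
  move=> y ezy; rewrite -hz (gdist_tri x conn ezy) andbT.
  by apply: gdist_tri conn _; rewrite sym.
rewrite mxE.
case: eqP => [jeqi|jnei].
  have Hdeg := deg_b0 z DRG.
  suff : (#|[set y | e z y & gdist e x y == i]| + b j + c j)%N = b 0.
    move=> <-; rewrite !natrD -jeqi.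
    by rewrite addrAC !addrK.
  rewrite -Hdeg -Hc -Hb !card_sumb -!big_split /=; apply: eq_bigr => y _.
  rewrite -jeqi.
  case ezy: (e z y) => //=.
  have := tri _ ezy; set g := gdist e x y.
  case: (nat_of_ord j) hz => [|j'] hz' /=.
    move=> h; have g0 : g != 0.
      rewrite /g gdist_eq0 //; apply/negP => /eqP yx.
      move/eqP: hz'; rewrite gdist_eq0 // => /eqP zx.
      by rewrite yx -zx irr in ezy.
    have -> : g = 1 by move: h g0; lia.
    by [].
  move=> /andP[h1 h2]; lia.
case: eqP => [jeqi1|jnei1].
  by rewrite -Hc; congr (_%:R)%R; apply: eq_card => y; rewrite !in_set jeqi1.
case: eqP => [ieqj1|inej1].
  by rewrite -Hb; congr (_%:R)%R; apply: eq_card => y; rewrite !in_set ieqj1.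
rewrite (_ : #|_| = 0) //; apply: eq_card0 => y; rewrite !in_set.
apply/negP => /andP[ezy /eqP gi]; have := tri _ ezy; rewrite gi.
move: jnei jnei1 inej1; lia.
Qed.


Lemma ker_uniq (R : realFieldType) d b c (s : R) (w : 'cV[R]_d.+1) :
  (forall i, (0 < i <= d)%N -> (0 < c i)%N) ->
  ((s%:M + inter_mx R d b c) *m w = 0)%R -> w ord0 ord0 = 0%R -> w = 0%R.
Proof.
move=> cpos Hw w0.
suff H : forall n, (n <= d)%N -> forall j : 'I_d.+1, (j <= n)%N -> w j ord0 = 0%R.
  apply/matrixP => i k; rewrite (ord1 k) mxE; apply: (H d) => //; rewrite -ltnS //.
elim=> [|n IH] nd j jn.
  have -> : j = ord0 by apply: val_inj => /=; lia.
  done.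
rewrite leq_eqVlt in jn; case/orP: jn => [/eqP jn|]; last by rewrite ltnS; apply: IH; lia.
have nd' : (n < d.+1)%N by lia.
pose i := Ordinal nd'.
have := congr1 (fun M : 'cV[R]_d.+1 => M i ord0) Hw; rewrite !mxE (bigD1 j) //= big1.
  rewrite addr0 !mxE jn eqxx /= (_ : (n.+1 == n) = false); last by lia.
  rewrite (_ : (i == j) = false); last first.
    by apply/negP => /eqP ij; have := congr1 val ij; rewrite /= jn; lia.
  rewrite mulr0n add0r => /eqP; rewrite mulf_eq0 => /orP[|/eqP //].
  rewrite pnatr_eq0 => /eqP c0; exfalso; have := cpos n.+1; rewrite c0; lia.
move=> k kj; rewrite !mxE.
case: (ltnP k n.+1) => kn.
  by rewrite (IH _ k) ?mulr0 //; lia.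
have kn' : (k > n.+1)%N by move: kj; rewrite -(inj_eq val_inj) /= jn; lia.
rewrite /= ifN; last by lia.
rewrite ifN; last by lia.
rewrite ifN; last by lia.
rewrite (_ : (i == k) = false) ?mulr0n ?add0r ?mul0r //.
by apply/negP => /eqP ik; rewrite -ik /= in kn'; lia.
Qed.



Lemma antipode_ex (T : finType) (e : rel T) d (x : T) :
  antipodal_double_cover e d ->
  exists a, gdist e x a = d /\ forall y, gdist e x y = d -> y = a.
Proof.
move=> AP; have /cards1P [a Ha] : #|[set y | gdist e x y == d]| == 1 by rewrite AP.
have : a \in [set y | gdist e x y == d] by rewrite Ha in_set1.
rewrite in_set => /eqP ha; exists a; split => // y hy.
have : y \in [set y | gdist e x y == d] by rewrite in_set hy.
by rewrite Ha in_set1 => /eqP.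
Qed.

Lemma dist_ex (T : finType) (e : rel T) d b c (x : T) :
  distance_regular e d b c -> antipodal_double_cover e d ->
  forall k, k <= d -> exists y, gdist e x y = d - k.
Proof.
move=> DRG AP; have := DRG; case=> [[sym irr] [conn [diam DR]]].
elim=> [|k IH] kd.
  by have [a [ha _]] := antipode_ex x AP; exists a; rewrite subn0.
have [y hy] := IH (ltnW kd).
have hy' : gdist e x y = (d - k.+1).+1 by rewrite hy; lia.
by have [w [_ hw]] := gdist_pred conn sym hy'; exists w.
Qed.

Lemma c_pos (T : finType) (e : rel T) d b c (x : T) :
  distance_regular e d b c -> antipodal_double_cover e d ->
  forall i, 0 < i <= d -> 0 < c i.
Proof.
move=> DRG AP; have := DRG; case=> [[sym irr] [conn [diam DR]]].
move=> i /andP[i0 id].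
have [y hy] := dist_ex x DRG AP (leq_subr i d).
rewrite subKn // in hy.
have hy' : gdist e x y = i.-1.+1 by rewrite hy; lia.
have [w [ew hw]] := gdist_pred conn sym hy'.
have [<- _] := DR i x y id hy.
by apply/card_gt0P; exists w; rewrite in_set ew hw eqxx.
Qed.

Local Open Scope ring_scope.

Lemma main_gen (R : realFieldType) (T : finType) (e : rel T) (d : nat)
    (b c : nat -> nat) (s : nat) :
  (0 < d)%N ->
  distance_regular e d b c ->
  antipodal_double_cover e d ->
  (exists l : T -> nat, labeling l /\
    exists k : nat, forall x : T, (\sum_(y | e x y) l y + s * l x)%N = k) ->
  exists u : 'cV[R]_d.+1,
       u ord0 ord0 = 1 /\ u ord_max ord0 = -1 /\
       forall v : 'cV[R]_d.+1,
         ((s%:R)%:M + inter_mx R d b c) *m v = 0 <-> exists t : R, v = t *: u.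
Proof.
move=> d0 DRG AP [l [[linj lrange] [k hk]]].
have := DRG; case=> [[sym irr] [conn [diam DR]]].
case: (pickP (fun _ : T => true)) => [x0 _|Hn]; last first.
  by exfalso; move: diam; rewrite /diameter big_pred0 //; lia.
have cpos := c_pos x0 DRG AP.
have rpos : (0 < b 0)%N.
  have [a [ha _]] := antipode_ex x0 AP.
  have ha' : gdist e x0 a = d.-1.+1 by rewrite ha; lia.
  have [w [ew _]] := gdist_pred conn sym ha'.
  by rewrite -(deg_b0 a DRG); apply/card_gt0P; exists w; rewrite in_set.
pose f y : R := (b 0 + s)%:R * (l y)%:R - k%:R.
have hf : forall y, s%:R * f y + \sum_(z | e y z) f z = 0.
  move=> y; rewrite sumrB -mulr_sumr.
  have -> : \sum_(z | e y z) (k%:R : R) = (b 0)%:R * k%:R.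
    rewrite big_mkcond /= -(deg_b0 y DRG) card_sumb natr_sum mulr_suml.
    by apply: eq_bigr => z _; case: (e y z); rewrite ?mul1r ?mul0r.
  have hk' := congr1 (fun n => n%:R : R) (hk y); rewrite /= natrD natrM natr_sum in hk'.
  have -> : \sum_(z | e y z) ((l z)%:R : R) = k%:R - s%:R * (l y)%:R.
    by rewrite -hk' addrK.
  rewrite /f natrD; ring.
pose od x y : 'I_d.+1 := inord (gdist e x y).
have odE : forall x y, (od x y : nat) = gdist e x y.
  by move=> x y; rewrite inordK // ltnS -diam gdist_diam.
pose vec x : 'cV[R]_d.+1 := \col_j \sum_(y | od x y == j) f y.
pose M : 'M[R]_d.+1 := (s%:R)%:M + inter_mx R d b c.
have vecK : forall x, M *m vec x = 0.
  move=> x; apply/matrixP => i z; rewrite (ord1 z) mulmxDl mul_scalar_mx !mxE.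
  have -> : \sum_j inter_mx R d b c i j * vec x j ord0 =
            \sum_(w | gdist e x w == i) \sum_(y | e w y) f y.
    transitivity (\sum_y inter_mx R d b c i (od x y) * f y).
      rewrite (partition_big (od x) xpredT) //=; apply: eq_bigr => j _.
      rewrite [vec _ _ _]mxE mulr_sumr; apply: eq_bigr => y /eqP -> //.
    transitivity (\sum_y \sum_w ((e y w && (gdist e x w == i) : nat)%:R * f y)).
      apply: eq_bigr => y _; rewrite -(count_B _ _ DRG (esym (odE x y))).
      by rewrite card_sumb natr_sum mulr_suml.
    rewrite exchange_big /= [RHS]big_mkcond /=; apply: eq_bigr => w _.
    case: (gdist e x w == i); last by rewrite big1 // => y _; rewrite andbF mul0r.
    rewrite [RHS]big_mkcond /=; apply: eq_bigr => y _; rewrite andbT sym.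
    by case: (e w y); rewrite ?mul1r ?mul0r.
  have -> : \sum_(y | od x y == i) f y = \sum_(w | gdist e x w == i) f w.
    by apply: eq_bigl => y; rewrite -val_eqE /= odE.
  by rewrite mulr_sumr -big_split /= big1.
have vec0 : forall x, vec x ord0 ord0 = f x.
  move=> x; rewrite mxE (big_pred1 x) // => y.
  by rewrite -val_eqE /= odE gdist_eq0.
have vecd : forall x a, gdist e x a = d -> vec x ord_max ord0 = f a.
  move=> x a ha; have [a' [ha' uq]] := antipode_ex x AP.
  rewrite mxE (big_pred1 a) // => y; rewrite -val_eqE /= odE /=.
  apply/eqP/eqP => [/uq ->|->//]; by rewrite (uq a).
have kerE : forall u : 'cV[R]_d.+1, u ord0 ord0 = 1 -> M *m u = 0 ->
    forall v : 'cV[R]_d.+1, M *m v = 0 -> v = v ord0 ord0 *: u.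
  move=> u u0 uK v vK; apply/eqP; rewrite -subr_eq0; apply/eqP.
  apply: (ker_uniq (b := b) (s := s%:R) cpos).
    by rewrite -/M mulmxBr -scalemxAr uK vK scaler0 subr0.
  by rewrite !mxE u0 mulr1 subrr.
have finj : injective f.
  move=> y z; rewrite /f => /addIr /mulfI H; apply: linj.
  apply/eqP; rewrite -(eqr_nat R) H //.
  by rewrite pnatr_eq0 -lt0n addn_gt0 rpos.
have [x [a [fx0 [xa ax]]]] : exists x a, f x != 0 /\ gdist e x a = d /\ gdist e a x = d.
  have [a0 [ha0 _]] := antipode_ex x0 AP.
  have ha0' : gdist e a0 x0 = d by rewrite gdist_sym.
  have [fx|fx] := eqVneq (f x0) 0; last by exists x0, a0.
  exists a0, x0; split=> //; apply/eqP => fa; have ax : a0 = x0 by apply: finj; rewrite fx fa.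
  by move: ha0; rewrite ax gdist_xx //; lia.
have fxa : f x != f a.
  by apply/eqP => /finj xeqa; move: xa; rewrite xeqa gdist_xx //; lia.
pose u := (f x)^-1 *: vec x.
have u0 : u ord0 ord0 = 1 by rewrite mxE vec0 mulVf.
have uK : M *m u = 0 by rewrite -scalemxAr vecK scaler0.
exists u; split => //; split; last first.
  move=> v; split => [vK|[t ->]]; first by exists (v ord0 ord0); apply: kerE.
  by rewrite -scalemxAr uK scaler0.
have Ha := kerE u u0 uK (vec a) (vecK a).
have := congr1 (fun m : 'cV[R]_d.+1 => m ord_max ord0) Ha.
rewrite /= vec0 (vecd a x ax) [in RHS]mxE [u _ _]mxE (vecd x a xa) => H.
have H2 : f x * f x = f a * f a.
  rewrite {1}H; field; exact: fx0.
have H3 : f a = - f x.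
  have : (f x - f a) * (f x + f a) = 0 by transitivity (f x * f x - f a * f a); [ring | rewrite H2 subrr].
  move/eqP; rewrite mulf_eq0 subr_eq0 (negbTE fxa) /= addr_eq0 => /eqP ->.
  by rewrite opprK.
by rewrite H3 mulrN mulVf.
Qed.

Unset Implicit Arguments.

Theorem lemma2p5 (R : realFieldType) (T : finType) (e : rel T) (d : nat)
    (b c : nat -> nat) :
  (0 < d)%N ->
  distance_regular e d b c ->
  antipodal_double_cover e d ->
  (distance_magic e ->
     exists u : 'cV[R]_d.+1,
       u ord0 ord0 = 1 /\ u ord_max ord0 = -1 /\
       forall v : 'cV[R]_d.+1,
         inter_mx R d b c *m v = 0 <-> exists t : R, v = t *: u) /\
  (closed_distance_magic e ->
     exists u : 'cV[R]_d.+1,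
       u ord0 ord0 = 1 /\ u ord_max ord0 = -1 /\
       forall v : 'cV[R]_d.+1,
         (1%:M + inter_mx R d b c) *m v = 0 <-> exists t : R, v = t *: u).
Proof.
move=> d0 DRG AP; split.
  move=> [l [lab [k hk]]].
  have := @main_gen R T e d b c 0 d0 DRG AP.
  case.
    by exists l; split => //; exists k => x; rewrite mul0n addn0.
  move=> u [u0 [ud H]]; exists u; split => //; split => // v.
  rewrite -H (_ : (0%:R : R)%:M = 0) ?add0r //.
  by apply/matrixP => i j; rewrite !mxE mul0rn.
move=> [l [lab [k hk]]].
have := @main_gen R T e d b c 1 d0 DRG AP.
case.
  exists l; split => //; exists k => x; rewrite mul1n -(hk x) [RHS](bigD1 x) /=; last by rewrite eqxx orbT.
  rewrite addnC; congr (_ + _)%N; apply: eq_bigl => y.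
  by case: eqP => [->|_]; rewrite ?orbF ?andbT ?andbF //; have [_ irr] := DRG.1; rewrite irr.
by move=> u [u0 [ud H]]; exists u; split => //; split => //.
Qed.
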